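(* Let $q$ be a prime and $1\le K<N$ with $q^K>2$, and let $M=q^K$. Let $G$ ($K\times N$) and $\mathbf{v}\in\mathbb{F}_q^N$ have independent uniformly distributed entries in $\mathbb{F}_q$, and for each message index $j\in\{0,\dots,M-1\}$ let $\mathbf{x}_j=\mathbf{u}_jG+\mathbf{v}$, where $\mathbf{u}_j\in\mathbb{F}_q^K$ is the $q$-ary representation of $j$. Let $P_N(\mathbf{y}\mid\mathbf{x})$ be a channel transition probability from inputs in $\mathbb{F}_q^N$ to outputs in a finite set, and for input $\mathbf{x}$ and output $\mathbf{y}$ let $A(\mathbf{x},\mathbf{y})=\{\mathbf{x}': P_N(\mathbf{y}\mid\mathbf{x}')\ge P_N(\mathbf{y}\mid\mathbf{x})\}$. Fix an index $m$, a value $\mathbf{x}_m$ of its codeword and an output $\mathbf{y}$; for $j\ne m$ let $A_j(\mathbf{x}_m,\mathbf{y})$ be the event $\{\mathbf{x}_j\in A(\mathbf{x}_m,\mathbf{y})\}$, with probabilities over the ensemble conditioned on the codeword of index $m$ being $\mathbf{x}_m$, and let $\alpha=\Pr(A_{m'}(\mathbf{x}_m,\mathbf{y}))$ for any $m'\neq m$ (this does not depend on $m'$). Then for every constant $\rho\ge1$, $$\frac{(M-1)\alpha}{q}-[(M-1)\alpha]^\rho\le\Pr\Big(\bigcup_{m'\ne m}A_{m'}(\mathbf{x}_m,\mathbf{y})\Big)\le (M-1)\alpha.$$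
   Context: All vector operations are componentwise mod $q$. *)

(* Defs.v *)
From HB Require Import structures.
From mathcomp Require Import all_boot all_order all_algebra.
From mathcomp Require Import all_classical all_reals all_analysis.
Set Implicit Arguments. Unset Strict Implicit. Unset Printing Implicit Defensive.
Import Order.TTheory GRing.Theory Num.Theory.
Local Open Scope ring_scope.

(* The random ensemble: a pair (G, v) with G : K x N matrix and v : row vector,
   uniformly distributed over the finite set of all such pairs. *)
Definition ensemble (q K N : nat) : finType :=
  ('M['F_q]_(K, N) * 'rV['F_q]_N)%type.

Definition digits_row (q K j : nat) : 'rV['F_q]_K :=
  \row_(i < K) (((j %/ q ^ i) %% q)%N)%:R.

Definition codeword (q K N j : nat) (Gv : ensemble q K N) : 'rV['F_q]_N :=
  digits_row q K j *m Gv.1 + Gv.2.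

(* A(x, y) = { x' : P(y|x') >= P(y|x) }, with P x y standing for P_N(y|x). *)
Definition Aset (R : realType) (q N : nat) (Y : finType)
  (P : 'rV['F_q]_N -> Y -> R) (x : 'rV['F_q]_N) (y : Y) : pred 'rV['F_q]_N :=
  [pred x' | P x y <= P x' y].

Definition cond_prob (R : realType) (q K N m : nat) (xm : 'rV['F_q]_N)
  (E : pred (ensemble q K N)) : R :=
  (#|[set Gv : ensemble q K N | (codeword m Gv == xm) && E Gv]|%:R
   / #|[set Gv : ensemble q K N | codeword m Gv == xm]|%:R).
Arguments cond_prob R q K N m xm E : clear implicits.
Arguments codeword q K N j Gv : clear implicits.

(* Main.v *)
Require Import Defs.
From HB Require Import structures.
From mathcomp Require Import all_boot all_order all_algebra.
From mathcomp Require Import all_classical all_reals all_analysis.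
From Stdlib Require Import Lia.
From mathcomp Require Import zify.
From mathcomp Require Import ring lra.
Import Order.TTheory GRing.Theory Num.Theory.
Local Open Scope ring_scope.
Set Implicit Arguments. Unset Strict Implicit. Unset Printing Implicit Defensive.

Lemma card_sum (T : finType) (P : pred T) :
  #|[set x | P x]| = (\sum_x (P x : nat))%N.
Proof.
rewrite -sum1_card big_mkcond /=; apply: eq_bigr => x _; rewrite inE; by case: (P x).
Qed.

Lemma fiber_shift (F : finFieldType) K N (T : eqType) (f : 'M[F]_(K,N) -> T) t t0 H :
  (forall G, (f (G + H) == t) = (f G == t0)) ->
  #|[set G | f G == t]| = #|[set G | f G == t0]|.
Proof.
move=> hf; rewrite !card_sum (reindex_inj (addIr H)) /=.
by apply: eq_bigr => G _; rewrite hf.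
Qed.

Lemma fiber_count (F : finFieldType) K N (T : finType) (f : 'M[F]_(K,N) -> T) n0 :
  (forall t, #|[set G | f G == t]| = n0) ->
  forall P : pred T, #|[set G | P (f G)]| = (#|[set t | P t]| * n0)%N.
Proof.
move=> hf P; rewrite card_sum (partition_big f predT) //=.
rewrite card_sum big_distrl /=; apply: eq_bigr => t _.
rewrite -(hf t) card_sum big_mkcond /= [in RHS]big_distrr /=.
apply: eq_bigr => G _; case: eqP => [->|_]; by case: (P t).
Qed.

Lemma shift1 (F : finFieldType) K N (d : 'rV[F]_K) : d != 0 ->
  forall t : 'rV[F]_N, exists H, forall G, (d *m (G + H) == t) = (d *m G == 0).
Proof.
move=> dn t; have : row_free d by rewrite /row_free rank_rV dn.
case/row_freeP => B hB; exists (B *m t) => G.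
rewrite mulmxDr mulmxA hB mul1mx.
by rewrite -subr_eq0 addrK.
Qed.

Lemma shift2 (F : finFieldType) K N (d d' : 'rV[F]_K) : row_free (col_mx d d') ->
  forall t : 'rV[F]_N * 'rV[F]_N, exists H, forall G,
   ((d *m (G + H), d' *m (G + H)) == t) = ((d *m G, d' *m G) == (0,0)).
Proof.
case/row_freeP => B hB [t1 t2]; exists (B *m col_mx t1 t2) => G.
have e : col_mx d d' *m (B *m col_mx t1 t2) = col_mx t1 t2 by rewrite mulmxA hB mul1mx.
rewrite mul_col_mx in e.
have e1 : d *m (B *m col_mx t1 t2) = t1 by have := congr1 usubmx e; rewrite !col_mxKu.
have e2 : d' *m (B *m col_mx t1 t2) = t2 by have := congr1 dsubmx e; rewrite !col_mxKd.
rewrite !mulmxDr e1 e2 !xpair_eqE -(subr_eq0 (_ + t1)) -(subr_eq0 (_ + t2)) !addrK.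
done.
Qed.

Definition normd (F : fieldType) K (d : 'rV[F]_K) :=
  [exists i : 'I_K, (d 0 i == 1) && [forall k : 'I_K, (k < i)%N ==> (d 0 k == 0)]].
Arguments normd {F K} d.

Lemma normd_nz (F : fieldType) K (d : 'rV[F]_K) : normd d -> d != 0.
Proof.
case/existsP => i /andP [/eqP h _]; apply/eqP => d0; move: h; rewrite d0 mxE.
by move/eqP; rewrite eq_sym oner_eq0.
Qed.

Lemma norm_indep (F : fieldType) K (d d' : 'rV[F]_K) :
  normd d -> normd d' -> d != d' -> forall a b, a *: d + b *: d' = 0 -> a = 0 /\ b = 0.
Proof.
case/existsP => i /andP [/eqP di /forallP hi].
case/existsP => i' /andP [/eqP di' /forallP hi'] dd a b e.
have co k : a * d 0 k + b * d' 0 k = 0.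
  by have := congr1 (fun M : 'rV[F]_K => M 0 k) e; rewrite !mxE.
case: (ltngtP i i') => hii.
- have := co i; rewrite di (eqP (implyP (hi' i) hii)) mulr1 mulr0 addr0 => a0.
  split=> //; have := co i'; by rewrite a0 di' mul0r add0r mulr1.
- have := co i'; rewrite di' (eqP (implyP (hi i') hii)) mulr1 mulr0 add0r => b0.
  split=> //; have := co i; by rewrite b0 di mul0r addr0 mulr1.
- move/val_inj: hii => hii; subst i'; have := co i; rewrite di di' !mulr1 => ab.
  have bE : b = - a by apply/eqP; rewrite -addr_eq0 addrC ab.
  move: e; rewrite bE scaleNr -scalerBr => /eqP; rewrite scaler_eq0 subr_eq0.
  case/orP => [/eqP ->|/eqP h]; first by rewrite oppr0.
  by rewrite h eqxx in dd.
Qed.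

Lemma norm_free (F : fieldType) K (d d' : 'rV[F]_K) :
  normd d -> normd d' -> d != d' -> row_free (col_mx d d').
Proof.
move=> nd nd' dd; apply: inj_row_free => v.
rewrite -[v]hsubmxK mul_row_col (mx11_scalar (lsubmx v)) (mx11_scalar (rsubmx v)).
rewrite !mul_scalar_mx => /(norm_indep nd nd' dd) [-> ->].
apply/matrixP => i j; rewrite !mxE.
by case: fintype.split => k; rewrite mxE mul0rn.
Qed.


Lemma norm_decomp (F : fieldType) K (d : 'rV[F]_K) : d != 0 ->
  exists c f, [/\ c != 0, normd f & d = c *: f].
Proof.
move=> dn.
have [i0 hi0] : exists i, d 0 i != 0.
  apply/existsP; apply: contraNT dn => /existsPn h; apply/eqP/rowP => i.
  by rewrite mxE; have := h i; move/negbNE/eqP.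
case: (@arg_minnP _ i0 (fun i => d 0 i != 0) (fun i : 'I_K => val i) hi0) => i hi hmin.
exists (d 0 i), ((d 0 i)^-1 *: d); split => //.
- apply/existsP; exists i; rewrite mxE mulVf // eqxx /=.
  apply/forallP => k; apply/implyP => ki; rewrite mxE.
  case: (eqVneq (d 0 k) 0) => [->|/hmin]; first by rewrite mulr0.
  by rewrite leqNgt ki.
- by rewrite scalerA divff // scale1r.
Qed.

Lemma card_nz_le (F : finFieldType) K :
  (#|[set d : 'rV[F]_K | d != 0%R]| <= #|[set c : F | c != 0%R]| * #|[set d : 'rV[F]_K | normd d]|)%N.
Proof.
rewrite -cardsX; apply: leq_trans (leq_imset_card (fun p : F * 'rV[F]_K => p.1 *: p.2) _).
apply: subset_leq_card; apply/fintype.subsetP => d; rewrite inE => dn.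
case: (norm_decomp dn) => c [f [cn nf ->]].
by apply/imsetP; exists (c, f); rewrite ?inE ?cn ?nf.
Qed.

Lemma card_nz (F : finFieldType) K :
  (1 + #|[set d : 'rV[F]_K | d != 0%R]| = #|F| ^ K)%N.
Proof.
have -> : (#|F| ^ K = #|{: 'rV[F]_K}|)%N by rewrite card_mx mul1n.
rewrite card_sum -sum1_card [in LHS](bigD1 0) // [in RHS](bigD1 0) //=.
by rewrite eqxx add0n; congr (_ + _)%N; apply: eq_bigr => d ->.
Qed.

Lemma card_fam_le (F : finFieldType) K :
  (#|[set d : 'rV[F]_K | normd d]| <= #|[set d : 'rV[F]_K | d != 0%R]|)%N.
Proof.
apply: subset_leq_card; apply/fintype.subsetP => d; rewrite !inE; exact: normd_nz.
Qed.

Lemma digits_inj_nat q K j k : (0 < q)%N -> (j < q ^ K)%N -> (k < q ^ K)%N ->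
  (forall i, (i < K)%N -> j %/ q ^ i %% q = k %/ q ^ i %% q)%N -> j = k.
Proof.
move=> q0; elim: K j k => [|K IH] j k.
  by rewrite expn0 !ltnS !leqn0 => /eqP -> /eqP ->.
move=> hj hk h.
rewrite (divn_eq j q) (divn_eq k q).
have h0 := h 0%N isT; rewrite expn0 !divn1 in h0; rewrite h0.
suff -> : (j %/ q = k %/ q)%N by []. apply: IH.
- by rewrite ltn_divLR // -expnSr.
- by rewrite ltn_divLR // -expnSr.
- move=> i hi; have := h i.+1 hi; by rewrite expnS !divnMA.
Qed.

Lemma card_sum_ex (T I : finType) (A : pred I) (E : I -> pred T) x :
  [exists i in A, E i x] = (0 < \sum_(i in A) (E i x : nat))%N.
Proof.
apply/idP/idP.
- case/existsP => i /andP [iA Ei]; rewrite (bigD1 i) //= Ei; exact: ltn_addr.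
- rewrite lt0n sum_nat_eq0 => /forallPn [i]; rewrite negb_imply => /andP [iA].
  case: (E i x) /idP => // Ei _; apply/existsP; exists i; by rewrite iA.
Qed.

Lemma union_bd (T I : finType) (A : pred I) (E : I -> pred T) :
  (#|[set x | [exists i in A, E i x]]| <= \sum_(i in A) #|[set x | E i x]|)%N.
Proof.
under eq_bigr do rewrite card_sum.
rewrite card_sum exchange_big /=; apply: leq_sum => x _.
by rewrite card_sum_ex; case: (\sum_(i in A) _)%N.
Qed.

Lemma sq_split (I : finType) (A : pred I) (e : I -> bool) :
  ((\sum_(i in A) (e i : nat)) * (\sum_(i in A) (e i : nat)) =
   \sum_(i in A) (e i : nat) + \sum_(i in A) \sum_(j in A | j != i) ((e i && e j) : nat))%N.
Proof.
rewrite big_distrl -big_split /=; apply: eq_bigr => i iA.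
rewrite big_distrr (bigD1 i) //=; congr (_ + _)%N; first by case: (e i).
by apply: eq_bigr => j _; rewrite mulnb.
Qed.

Lemma bonf (T I : finType) (A : pred I) (E : I -> pred T) :
  (2 * \sum_(i in A) #|[set x | E i x]| <=
   2 * #|[set x | [exists i in A, E i x]]| +
   \sum_(i in A) \sum_(j in A | j != i) #|[set x | E i x && E j x]|)%N.
Proof.
under eq_bigr do rewrite card_sum.
under [X in (_ <= _ + X)%N]eq_bigr => i _ do under eq_bigr do rewrite card_sum.
under [X in (_ <= _ + X)%N]eq_bigr => i _ do rewrite exchange_big /=.
rewrite card_sum exchange_big /= [X in (_ <= _ + X)%N]exchange_big /=.
rewrite !big_distrr -big_split /=; apply: leq_sum => x _.
rewrite card_sum_ex.
have := sq_split A (fun i => E i x).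
set n := (\sum_(i in A) _)%N; set X := (\sum_(i in A) _)%N => e.
case: n e => [|n] e //=.
nia.
Qed.


Lemma card_setT' (T : finType) : #|[set x : T | true]| = #|T|.
Proof. by rewrite card_sum -sum1_card. Qed.

Lemma count1 (F : finFieldType) K N (d : 'rV[F]_K) (S : pred 'rV[F]_N) : d != 0 ->
 (#|[set G : 'M[F]_(K,N) | d *m G \in S]| * #|{: 'rV[F]_N}| =
  #|[set z | z \in S]| * #|{: 'M[F]_(K,N)}|)%N.
Proof.
move=> dn; set n0 := #|[set G : 'M[F]_(K,N) | d *m G == 0]|.
have hf : forall t, #|[set G : 'M[F]_(K,N) | d *m G == t]| = n0.
  by move=> t; case: (shift1 dn t) => H hH; exact: fiber_shift hH.
rewrite (fiber_count hf (fun z => z \in S)).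
have := fiber_count hf (fun _ => true); rewrite !card_setT' => ->.
by rewrite mulnAC mulnA.
Qed.

Lemma count2 (F : finFieldType) K N (d d' : 'rV[F]_K) (S : pred 'rV[F]_N) :
 row_free (col_mx d d') ->
 (#|[set G : 'M[F]_(K,N) | (d *m G \in S) && (d' *m G \in S)]| * (#|{: 'rV[F]_N}| * #|{: 'rV[F]_N}|) =
  #|[set z | z \in S]| * #|[set z | z \in S]| * #|{: 'M[F]_(K,N)}|)%N.
Proof.
move=> fr.
set n0 := #|[set G : 'M[F]_(K,N) | (d *m G, d' *m G) == (0,0)]|.
have hf : forall t, #|[set G : 'M[F]_(K,N) | (d *m G, d' *m G) == t]| = n0.
  by move=> t; case: (shift2 fr t) => H hH; exact: fiber_shift hH.
rewrite (fiber_count hf (fun p => (p.1 \in S) && (p.2 \in S))).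
have := fiber_count hf (fun _ => true); rewrite !card_setT' card_prod => ->.
have -> : #|[set t : 'rV[F]_N * 'rV[F]_N | (t.1 \in S) && (t.2 \in S)]| =
          (#|[set z | z \in S]| * #|[set z | z \in S]|)%N.
  rewrite !card_sum -(pair_bigA _ (fun a b => ((a \in S) && (b \in S) : nat))) /= big_distrl /=; apply: eq_bigr => a _.
  by rewrite big_distrr /=; apply: eq_bigr => b _; rewrite mulnb.
by rewrite mulnAC mulnA !mulnA.
Qed.

Lemma cond_card q K N m xm (E : pred (ensemble q K N)) :
 #|[set Gv : ensemble q K N | (codeword q K N m Gv == xm) && E Gv]| =
 #|[set G : 'M['F_q]_(K,N) | E (G, xm - digits_row q K m *m G)]|.
Proof.
rewrite !card_sum.
have -> : (\sum_(Gv : ensemble q K N) ((codeword q K N m Gv == xm) && E Gv : nat) =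
   \sum_(G : 'M['F_q]_(K,N)) \sum_(v : 'rV['F_q]_N) ((codeword q K N m (G, v) == xm) && E (G, v) : nat))%N.
  by rewrite pair_bigA; apply: eq_bigr => -[G v] _.
apply: eq_bigr => G _.
rewrite (bigD1 (xm - digits_row q K m *m G)) //= /codeword /=.
rewrite addrC subrK eqxx /= big1 ?addn0 // => v hv.
case: eqP => // e; case/negP: hv; by rewrite -e addrC addKr.
Qed.

Lemma digits_val q K (hq : prime q) j (i : 'I_K) :
  ((digits_row q K j 0 i : 'F_q) : nat) = (j %/ q ^ i %% q)%N.
Proof. by rewrite mxE val_Fp_nat // modn_mod. Qed.

Lemma digits_inj q K (hq : prime q) :
  injective (fun j : 'I_(q ^ K) => digits_row q K j).
Proof.
move=> j k e; apply: val_inj; apply: (@digits_inj_nat q K); [exact: prime_gt0 | exact: ltn_ord | exact: ltn_ord |].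
move=> i hi; have := congr1 (fun M : 'rV['F_q]_K => (M 0 (Ordinal hi) : nat)) e.
by rewrite /= !digits_val.
Qed.

Lemma digits_onto q K (hq : prime q) (w : 'rV['F_q]_K) :
  exists j : 'I_(q ^ K), digits_row q K j = w.
Proof.
have : w \in codom (fun j : 'I_(q ^ K) => digits_row q K j).
  apply: inj_card_onto; first exact: digits_inj.
  by rewrite card_mx card_Fp // mul1n card_ord.
by case/codomP => j ->; exists j.
Qed.


Lemma final_ineq (R : realType) (qr nz L al p c rho : R) :
  2 <= qr -> 0 <= al -> 0 <= L -> L <= nz -> nz <= (qr - 1) * L ->
  2 * L * al <= 2 * c + L * (L - 1) * al ^+ 2 -> c <= p -> 0 <= p -> 1 <= rho ->
  nz * al / qr - powR (nz * al) rho <= p.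
Proof.
move=> q2 al0 L0 Lnz nzL hb cp p0 r1.
set a := nz * al.
have a0 : 0 <= a by rewrite /a; apply: mulr_ge0 => //; lra.
have qr0 : 0 < qr by lra.
have aq : a / qr <= a.
  rewrite ler_pdivrMr //; nra.
case: (lerP 1 a) => ha.
- have := le1r_powR ha r1; lra.
- have hp := powR_ge0 a rho.
  suff : a / qr <= c by lra.
  rewrite ler_pdivrMr //.
  set x := L * al.
  set t := qr - 1.
  have t1 : 1 <= t by rewrite /t; lra.
  have x0 : 0 <= x by rewrite /x; nra.
  have xa : x <= a by rewrite /x /a; nra.
  have ax : a <= t * x by rewrite /x /a /t; nra.
  have h1 : 2 * x - x ^+ 2 <= 2 * c.
    have : 0 <= L * al ^+ 2 by nra.
    rewrite /x; nra.
  have h2 : 2 * a * t - a ^+ 2 <= t ^+ 2 * (2 * x - x ^+ 2).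
    have f1 : 0 <= t * x - a by lra.
    have f2 : 0 <= 2 * t - t * x - a by nra.
    have := mulr_ge0 f1 f2; nra.
  have h3 : 2 * a * t ^+ 2 <= (t + 1) * (2 * a * t - a ^+ 2).
    have f3 : 0 <= 2 * t - (t + 1) * a by nra.
    have := mulr_ge0 a0 f3; nra.
  have h4 : 2 * a * t ^+ 2 <= qr * (2 * x - x ^+ 2) * t ^+ 2.
    have : qr = t + 1 by rewrite /t; lra.
    move=> ->; have := ler_wpM2l (ler0n R 1) h2. nra.
  have t2 : 0 < t ^+ 2 by nra.
  have h5 : 2 * a <= qr * (2 * x - x ^+ 2).
    by move: h4; rewrite ler_pM2r.
  nra.
Qed.


Lemma sum_const_P (I : finType) (P : pred I) n :
  (\sum_(i | P i) n = #|[set i | P i]| * n)%N.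
Proof.
rewrite card_sum big_distrl /= big_mkcond; apply: eq_bigr => i _.
by case: (P i); rewrite ?mul1n ?mul0n.
Qed.

Lemma card_D1 (T : finType) (A : {set T}) a : a \in A ->
  (1 + #|[set j | (j \in A) && (j != a)]| = #|A|)%N.
Proof.
move=> aA; rewrite (cardsD1 a A) aA; congr (_ + _)%N.
by apply: eq_card => j; rewrite !inE andbC.
Qed.

Lemma card_nzF (T : finType) (a : T) : (1 + #|[set x | x != a]| = #|T|)%N.
Proof.
have aT : a \in [set x : T | true] by rewrite inE.
rewrite -card_setT' -(card_D1 aT); congr (_ + _)%N.
by apply: eq_card => j; rewrite !inE.
Qed.

Unset Implicit Arguments.
Theorem lemma2 (R : realType) (q K N : nat) (Y : finType)
  (P : 'rV['F_q]_N -> Y -> R)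
  (hq : prime q) (hK1 : (1 <= K)%N) (hKN : (K < N)%N) (hM : (2 < q ^ K)%N)
  (hP0 : forall x y, 0 <= P x y) (hP1 : forall x, \sum_(y : Y) P x y = 1)
  (m : 'I_(q ^ K)) (xm : 'rV['F_q]_N) (y : Y)
  (m' : 'I_(q ^ K)) (hm' : m' != m)
  (rho : R) (hrho : 1 <= rho) :
  let M := (q ^ K)%N in
  let alpha := cond_prob R q K N m xm
                 (fun Gv : ensemble q K N => codeword q K N m' Gv \in Aset P xm y) in
  let pU := cond_prob R q K N m xm
                 (fun Gv : ensemble q K N => [exists j : 'I_(q ^ K),
                               (j != m) && (codeword q K N j Gv \in Aset P xm y)]) in
  ((M - 1)%N%:R * alpha / q%:R - powR ((M - 1)%N%:R * alpha) rho <= pU)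
  /\ (pU <= (M - 1)%N%:R * alpha).
Proof.
move=> M alpha pU.
set u := digits_row q K.
set A := Aset P xm y.
pose S : pred 'rV['F_q]_N := [pred z | xm + z \in A].
pose d (j : 'I_(q ^ K)) := u j - u m.
have key' (j : 'I_(q ^ K)) (G : 'M['F_q]_(K,N)) :
    codeword q K N j (G, xm - u m *m G) = xm + d j *m G.
  by rewrite /codeword /= /d mulmxBl addrCA.
have key (j : 'I_(q ^ K)) (G : 'M['F_q]_(K,N)) : (codeword q K N j (G, xm - u m *m G) \in A) = (d j *m G \in S).
  by rewrite /codeword /= inE /d mulmxBl addrCA.
have dnz (j : 'I_(q ^ K)) : j != m -> d j != 0.
  move=> jm; rewrite /d subr_eq0; apply: contra jm => /eqP e.
  by apply/eqP; apply: (digits_inj hq).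
set W := #|{: 'M['F_q]_(K,N)}|.
set Qn := #|{: 'rV['F_q]_N}|.
set s := #|[set z | z \in S]|.
have hden : #|[set Gv : ensemble q K N | codeword q K N m Gv == xm]| = W.
  have e := cond_card m xm (fun _ : ensemble q K N => true); rewrite /= card_setT' in e.
  etransitivity; last exact: e.
  by rewrite !card_sum; apply: eq_bigr => Gv _; rewrite andbT.
have c1 (j : 'I_(q ^ K)) : j != m -> (#|[set G : 'M['F_q]_(K,N) | d j *m G \in S]| * Qn = s * W)%N.
  by move=> jm; apply: count1; apply: dnz.
pose cA := #|[set G : 'M['F_q]_(K,N) | d m' *m G \in S]|.
have hal : alpha = cA%:R / W%:R.
  rewrite /alpha /cond_prob hden (cond_card m xm (fun Gv => codeword q K N m' Gv \in A)).
  congr (_%:R / _); apply: eq_card => G; by rewrite !inE key'.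
pose cU := #|[set G : 'M['F_q]_(K,N) | [exists j, (j != m) && (d j *m G \in S)]]|.
have hpU : pU = cU%:R / W%:R.
  rewrite /pU /cond_prob hden (cond_card m xm (fun Gv => [exists j : 'I_(q ^ K),
                               (j != m) && (codeword q K N j Gv \in A)])).
  congr (_%:R / _); apply: eq_card => G; rewrite !inE.
  by apply: eq_existsb => j; rewrite key.
have hA := c1 m' hm'.
set nz := #|[set w : 'rV['F_q]_K | w != 0%R]|.
have hnz : (M - 1)%N = nz by rewrite /M -{1}(card_Fp hq) -(card_nz 'F_q K) addKn.
have ub : (cU * Qn <= nz * (s * W))%N.
  have : (cU <= \sum_(j | j != m) #|[set G : 'M['F_q]_(K,N) | d j *m G \in S]|)%N.
    exact: (union_bd (fun j : 'I_(q ^ K) => j != m) (fun j (G : 'M['F_q]_(K,N)) => d j *m G \in S)).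
  move=> h; apply: leq_trans (leq_mul h (leqnn Qn)) _; rewrite big_distrl /=.
  rewrite (eq_bigr (fun _ => s * W)%N) ?sum_const_P; last by move=> j jm; rewrite c1.
  rewrite -hnz; apply: eq_leq; congr (_ * _)%N.
  have := card_nzF m; rewrite card_ord => e.
  apply: (@addnI 1); rewrite e /M addnC subnK //.
  by rewrite expn_gt0 prime_gt0.
pose fam := [set f : 'rV['F_q]_K | normd f].
set L := #|fam|.
pose cU' := #|[set G : 'M['F_q]_(K,N) | [exists f in fam, f *m G \in S]]|.
have hsub : (cU' <= cU)%N.
  rewrite /cU' /cU !card_sum; apply: leq_sum => G _.
  case: (boolP [exists f in fam, f *m G \in S]) => //= /existsP [f /andP [ff fG]].
  have nf : normd f by rewrite inE in ff.
  have [j hj] := digits_onto hq (u m + f).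
  have dj : d j = f by rewrite /d /u hj addrC addKr.
  have jm : j != m.
    apply/eqP => e; move: (normd_nz nf); by rewrite -dj /d e subrr eqxx.
  suff -> : [exists j, (j != m) && (d j *m G \in S)] by [].
  by apply/existsP; exists j; rewrite jm dj fG.
have hb := bonf (fun f => f \in fam) (fun f (G : 'M['F_q]_(K,N)) => f *m G \in S).
have e1 : ((\sum_(i in (fun f => f \in fam)) #|[set G : 'M['F_q]_(K,N) | i *m G \in S]|) * Qn
           = L * (s * W))%N.
  rewrite big_distrl /= (eq_bigr (fun _ => s * W)%N) ?sum_const_P.
    by congr (_ * _)%N; apply: eq_card => f; rewrite !inE.
  by move=> f ff; apply: count1; apply: normd_nz; rewrite inE in ff.
have e2 : ((\sum_(i in (fun f => f \in fam)) \sum_(j in (fun f => f \in fam) | j != i)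
            #|[set G : 'M['F_q]_(K,N) | (i *m G \in S) && (j *m G \in S)]|) * (Qn * Qn)
           = L * ((L - 1) * (s * s * W)))%N.
  rewrite big_distrl /= (eq_bigr (fun _ => (L - 1) * (s * s * W))%N) ?sum_const_P.
    by congr (_ * _)%N; apply: eq_card => f; rewrite !inE.
  move=> f ff; rewrite big_distrl /= (eq_bigr (fun _ => s * s * W)%N) ?sum_const_P.
    congr (_ * _)%N; rewrite /L -(card_D1 ff) addKn.
    by apply: eq_card => g; rewrite !inE.
  move=> g /andP [gf gnf]; apply: count2; apply: norm_free.
  - by rewrite inE in ff.
  - by rewrite inE in gf.
  - by rewrite eq_sym.
have e3 : #|[set x : 'M['F_q]_(K,N) | [exists i in (fun f => f \in fam), i *m x \in S]]| = cU'.
  by apply: eq_card => x; rewrite !inE.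
rewrite e3 in hb.
have W0 : (0 < W)%N by apply/card_gt0P; exists 0.
have Q0 : (0 < Qn)%N by apply/card_gt0P; exists 0.
have WR : (0 : R) < W%:R by rewrite ltr0n.
have QR : (0 : R) < Qn%:R by rewrite ltr0n.
have hLL : (L%:R * (L - 1)%N%:R = L%:R * (L%:R - 1) :> R).
  by case: (L) => [|l]; rewrite ?mul0r // natrB // subn1 /= -natr1 addrK.
have hbR : 2 * L%:R * (s%:R * W%:R * Qn%:R) <=
           2 * cU'%:R * (Qn%:R * Qn%:R) + L%:R * (L%:R - 1) * (s%:R * s%:R * W%:R) :> R.
  have := hb; rewrite -(ler_nat R) natrD [X in X <= _ -> _]natrM [X in _ <= X + _ -> _]natrM => h.
  have e1R := congr1 (fun n => n%:R : R) e1; have e2R := congr1 (fun n => n%:R : R) e2.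
  rewrite /= !natrM in e1R e2R.
  move: h e1R e2R.
  set X1 := ((\sum_(i in _) _)%N)%:R; set X2 := ((\sum_(i in _) _)%N)%:R => h e1R e2R.
  have Q2 : (0 : R) <= Qn%:R * Qn%:R by apply: mulr_ge0; apply: ltW.
  have h2 := ler_wpM2r Q2 h.
  have a1 : 2%:R * X1 * (Qn%:R * Qn%:R) = 2 * L%:R * (s%:R * W%:R * Qn%:R).
    transitivity (2 * (X1 * Qn%:R) * Qn%:R); first by ring.
    by rewrite e1R; ring.
  have a2 : X2 * (Qn%:R * Qn%:R) = L%:R * (L%:R - 1) * (s%:R * s%:R * W%:R).
    by rewrite e2R mulrA hLL.
  have a3 : (2%:R * cU'%:R + X2) * (Qn%:R * Qn%:R) =
            2 * cU'%:R * (Qn%:R * Qn%:R) + X2 * (Qn%:R * Qn%:R) by ring.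
  by rewrite -a1 -a2 -a3.
have Qn0 : (Qn%:R : R) != 0 by rewrite lt0r_neq0.
have Wn0 : (W%:R : R) != 0 by rewrite lt0r_neq0.
have hal2 : alpha = s%:R / Qn%:R.
  rewrite hal; apply/eqP; rewrite eqr_div // -!natrM; apply/eqP; congr (_%:R).
  by rewrite hA.
have pU0 : 0 <= pU by rewrite hpU; apply: divr_ge0; apply: ler0n.
rewrite hnz; split.
- have u1 : (1 + #|[set c : 'F_q | c != 0%R]| = q)%N by rewrite card_nzF card_Fp.
  have unitsR : (#|[set c : 'F_q | c != 0%R]|%:R : R) = q%:R - 1.
    have := congr1 (fun n => n%:R : R) u1; rewrite /= natrD => <-; by rewrite addrAC subrr add0r.
  have hnzL := card_nz_le 'F_q K.
  have hLnz := card_fam_le 'F_q K.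
  apply: (@final_ineq R q%:R nz%:R L%:R alpha pU (cU'%:R / W%:R) rho) => //.
  + by rewrite (ler_nat R 2 q) prime_gt1.
  + by rewrite hal2; apply: divr_ge0; apply: ler0n.
  + by rewrite ler_nat.
  + by rewrite -unitsR -natrM ler_nat.
  + rewrite hal2 -subr_ge0.
    have -> : 2 * (cU'%:R / W%:R) + L%:R * (L%:R - 1) * (s%:R / Qn%:R) ^+ 2 - 2 * L%:R * (s%:R / Qn%:R)
      = (2 * cU'%:R * (Qn%:R * Qn%:R) + L%:R * (L%:R - 1) * (s%:R * s%:R * W%:R)
         - 2 * L%:R * (s%:R * W%:R * Qn%:R)) / (W%:R * Qn%:R * Qn%:R) :> R.
      by field; rewrite Wn0 Qn0.
    apply: divr_ge0; first by rewrite subr_ge0.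
    by apply: mulr_ge0; [apply: mulr_ge0|]; apply: ler0n.
  + rewrite hpU ler_wpM2r ?invr_ge0 ?ler0n //.
    by rewrite ler_nat.
- rewrite hpU hal2 -subr_ge0.
  have ubR : (cU%:R * Qn%:R <= nz%:R * (s%:R * W%:R) :> R) by rewrite -!natrM ler_nat.
  have -> : nz%:R * (s%:R / Qn%:R) - cU%:R / W%:R
     = (nz%:R * (s%:R * W%:R) - cU%:R * Qn%:R) / (Qn%:R * W%:R) :> R.
    by field; rewrite Wn0 Qn0.
  apply: divr_ge0; first by rewrite subr_ge0.
  by apply: mulr_ge0; apply: ler0n.
Qed.
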